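(* Let $(X,d)$ be a compact metric space, $T:X\to X$ a homeomorphism with $F_n(T)<\infty$ for all $n\geqslant1$, and $G$ a finite group acting continuously on $X$ such that $g\circ T=T\circ g$ for all $g\in G$; let $(X',T')$ be the quotient system. Suppose there exists $\eta>0$ with $\limsup_{n\to\infty}\frac1n\log F_n(T)=\eta$. Then \[ \eta\leqslant\limsup_{n\to\infty}\frac1n\log F_n(T')\leqslant\nabla\eta . \]
   Context: The quotient system: $X'=G\backslash X=\{\mathfrak{O}_G(x):x\in X\}$ where $\mathfrak{O}_G(x)=\{g(x):g\in G\}$, with metric $d'(\mathfrak{O}_G(x),\mathfrak{O}_G(y))=\min\{d(x',y'):x'\in\mathfrak{O}_G(x),y'\in\mathfrak{O}_G(y)\}$, and $T'(\mathfrak{O}_G(x))=\mathfrak{O}_G(T(x))$. $F_n(S)=\#\{x:S^n(x)=x\}$. $\nabla=\max\{|\langle g\rangle|:g\in G\}$ is the largest order of an element of $G$. *)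

(* Defs.v *)
From HB Require Import structures.
From mathcomp Require Import all_boot all_order all_algebra all_fingroup.
From mathcomp Require Import all_classical all_reals all_analysis.
From mathcomp Require Import finmap.
Set Implicit Arguments. Unset Strict Implicit. Unset Printing Implicit Defensive.
Import Order.TTheory GRing.Theory Num.Theory.
Local Open Scope classical_set_scope.
Local Open Scope ring_scope.
Local Open Scope fset_scope.

(* number of points of a set (meaningful when the set is finite) *)
Definition setcard (T : choiceType) (A : set T) : nat := #|` fset_set A|.

Definition Fix_count (T : choiceType) (S : T -> T) (n : nat) : nat :=
  setcard [set x | iter n S x = x].

Definition orbitG (X : Type) (gT : finGroupType) (G : {group gT})
  (act : X -> gT -> X) (x : X) : set X :=
  [set y | exists2 g, g \in G & y = act x g].

Definition quotient_space (X : Type) (gT : finGroupType) (G : {group gT})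
  (act : X -> gT -> X) : set (set X) :=
  [set O | exists x, O = orbitG G act x].

(* T'(O_G(x)) = O_G(T x), for any representative x of the orbit O *)
Definition quotient_map (X : Type) (gT : finGroupType) (G : {group gT})
  (act : X -> gT -> X) (T : X -> X) (O : set X) : set X :=
  \bigcup_(x in [set x | O = orbitG G act x]) orbitG G act (T x).

Definition Fix_count_quot (X : Type) (gT : finGroupType) (G : {group gT})
  (act : X -> gT -> X) (T : X -> X) (n : nat) : nat :=
  setcard [set O | quotient_space G act O /\ iter n (quotient_map G act T) O = O].

(* limsup_{n->oo} (1/n) log F n, with log 0 = -oo *)
Definition growth (R : realType) (F : nat -> nat) : \bar R :=
  limn_esup (fun n => if F n == 0%N then -oo%E else ((ln (F n)%:R) / n%:R)%:E).

Definition nabla (gT : finGroupType) (G : {group gT}) : nat :=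
  \max_(g in G) #[g]%g.

(* Main.v *)
Require Import Defs.
From HB Require Import structures.
From mathcomp Require Import all_boot all_order all_algebra all_fingroup.
From mathcomp Require Import all_classical all_reals all_analysis.
From mathcomp Require Import finmap zify ring lra.
Import Order.TTheory GRing.Theory Num.Theory.
Set Implicit Arguments. Unset Strict Implicit. Unset Printing Implicit Defensive.
Local Open Scope classical_set_scope.
Local Open Scope ring_scope.

Lemma setcard0 (Y : choiceType) : setcard (set0 : set Y) = 0%N.
Proof. by rewrite /setcard fset_set0. Qed.

Lemma setcard_sub {Y : choiceType} (A B : set Y) :
  finite_set B -> A `<=` B -> (setcard A <= setcard B)%N.
Proof.
move=> fB AB; have fA := sub_finite_set AB fB.
by rewrite /setcard; apply: fsubset_leq_card; rewrite -fset_set_sub.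
Qed.

Lemma setcard_img {Y Z : choiceType} (f : Y -> Z) (A : set Y) :
  finite_set A -> (setcard (f @` A) <= setcard A)%N.
Proof. by move=> fA; rewrite /setcard fset_set_image //; apply: leq_imfset_card. Qed.

Lemma setcard_U {Y : choiceType} (A B : set Y) : finite_set A -> finite_set B ->
  (setcard (A `|` B) <= setcard A + setcard B)%N.
Proof. by move=> fA fB; rewrite /setcard fset_setU //; apply: leq_card_fsetU. Qed.

Lemma setcard_bigU (I : eqType) (Y : choiceType) (s : seq I) (A : I -> set Y) :
  (forall i, i \in s -> finite_set (A i)) ->
  finite_set [set y | exists2 i, i \in s & A i y] /\
  (setcard [set y | exists2 i, i \in s & A i y] <= \sum_(i <- s) setcard (A i))%N.
Proof.
elim: s => [|i s IH] H.
  have -> : [set y | exists2 i, i \in [::] & A i y] = set0.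
    by apply/seteqP; split => y // [].
  by rewrite setcard0; split => //; exact: finite_set0.
have -> : [set y | exists2 j, j \in i :: s & A j y] =
   A i `|` [set y | exists2 j, j \in s & A j y].
  apply/seteqP; split => y.
    by move=> [j]; rewrite inE => /orP[/eqP ->|js Ay]; [left|right; exists j].
  by move=> [Ay|[j js Ay]]; [exists i; rewrite ?inE ?eqxx|exists j; rewrite // inE js orbT].
have [|fs cs] := IH; first by move=> j js; apply: H; rewrite inE js orbT.
have fi : finite_set (A i) by apply: H; rewrite inE eqxx.
split; first by rewrite finite_setU.
rewrite big_cons; apply: leq_trans; first exact: (setcard_U fi fs).
by rewrite leq_add2l.
Qed.

Lemma sum_le_const (I : Type) (s : seq I) (a : I -> nat) M :
  (forall i, (a i <= M)%N) -> (\sum_(i <- s) a i <= size s * M)%N.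
Proof.
move=> H; elim: s => [|i s IH]; first by rewrite big_nil.
by rewrite big_cons /= mulSn leq_add.
Qed.

Section Orbits.
Variables (X : choiceType) (T : X -> X) (gT : finGroupType) (G : {group gT})
  (act : X -> gT -> X).
Hypothesis h1 : forall x, act x 1%g = x.
Hypothesis hM : forall x g h, g \in G -> h \in G -> act (act x g) h = act x (g * h)%g.
Hypothesis hc : forall g x, g \in G -> T (act x g) = act (T x) g.
Hypothesis hfin : forall n : nat, (1 <= n)%N -> finite_set [set x : X | iter n T x = x].

Lemma orb_self x : orbitG G act x x.
Proof. by exists 1%g; rewrite ?group1 ?h1. Qed.

Lemma orb_eq x y : orbitG G act x y -> orbitG G act y = orbitG G act x.
Proof.
case=> g gG ->; apply/seteqP; split => z [h hG ->].
  by exists (g * h)%g; rewrite ?groupM ?hM.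
exists (g^-1 * h)%g; first by rewrite groupM ?groupV.
by rewrite hM ?groupM ?groupV // mulgA mulgV mul1g.
Qed.

Lemma qmap_orb x :
  quotient_map G act T (orbitG G act x) = orbitG G act (T x).
Proof.
apply/seteqP; split.
  move=> z [x' /= Ex' zO].
  have : orbitG G act x' x by rewrite -Ex'; apply: orb_self.
  case=> g gG xe.
  rewrite (@orb_eq (T x') (T x)) //.
  by exists g => //; rewrite xe hc.
by move=> z zO; exists x.
Qed.

Lemma iter_qmap n x :
  iter n (quotient_map G act T) (orbitG G act x) = orbitG G act (iter n T x).
Proof. by elim: n => //= n IH; rewrite IH qmap_orb. Qed.

Lemma iter_act m x g : g \in G -> iter m T (act x g) = act (iter m T x) g.
Proof. by move=> gG; elim: m => //= m IH; rewrite IH hc. Qed.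

Lemma iter_pow n x g : g \in G -> iter n T x = act x g ->
  forall k, iter (n * k) T x = act x (g ^+ k)%g.
Proof.
move=> gG Hn; elim=> [|k IH]; first by rewrite muln0 expg0 h1.
by rewrite mulnS iterD IH iter_act ?groupX // Hn hM ?groupX // expgS.
Qed.

Definition Qs n := [set O | quotient_space G act O /\
  iter n (quotient_map G act T) O = O].
Definition Ss n := [set x | exists2 k, k \in iota 0 (nabla G) &
  iter (n * k.+1) T x = x].

Lemma Qs_sub n : Qs n `<=` orbitG G act @` Ss n.
Proof.
move=> O [[x ->] HO]; exists x => //.
rewrite iter_qmap in HO.
have : orbitG G act (iter n T x) (iter n T x) := orb_self _.
rewrite HO; case=> g gG Hg.
have g0 := order_gt0 g.
have gN : (#[g]%g <= nabla G)%N.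
  by rewrite /nabla; apply: (leq_bigmax_cond (F := fun g => #[g]%g)).
exists (#[g]%g.-1).
  by rewrite mem_iota add0n; apply/andP; split => //; lia.
by rewrite prednK // (iter_pow gG Hg) expg_order h1.
Qed.

Lemma Ss_fin n : (1 <= n)%N -> finite_set (Ss n) /\
  (setcard (Ss n) <= \sum_(k <- iota 0 (nabla G)) Fix_count T (n * k.+1))%N.
Proof.
move=> n1; apply: (setcard_bigU (A := fun k => [set x | iter (n * k.+1) T x = x])).
by move=> k _; apply: hfin; rewrite muln_gt0 n1.
Qed.

Lemma Qs_fin n : (1 <= n)%N -> finite_set (Qs n).
Proof.
move=> n1; apply: (sub_finite_set (@Qs_sub n)).
by apply: finite_image; case: (Ss_fin n1).
Qed.

Lemma C2 n : (1 <= n)%N ->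
  (Fix_count_quot G act T n <= \sum_(k <- iota 0 (nabla G)) Fix_count T (n * k.+1))%N.
Proof.
move=> n1; have [fS cS] := Ss_fin n1.
apply: leq_trans; first apply: (setcard_sub (finite_image _ fS) (@Qs_sub n)).
apply: leq_trans; last exact: cS.
exact: setcard_img.
Qed.

Lemma C1 n : (1 <= n)%N ->
  (Fix_count T n <= #|gT| * Fix_count_quot G act T n)%N.
Proof.
move=> n1.
have [E|/set0P[x0 _]] := eqVneq [set x | iter n T x = x] set0.
  by rewrite /Fix_count E setcard0.
pose rep := xget x0.
pose f := fun g => (fun O => act (rep O) g) @` Qs n.
have [fU cU] := setcard_bigU (s := enum gT) (A := f)
   (fun g _ => finite_image _ (Qs_fin n1)).
apply: leq_trans; first apply: (setcard_sub fU).
  move=> x /= Hx; set O := orbitG G act x.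
  have OQ : Qs n O by split; [exists x|rewrite /O iter_qmap Hx].
  have rO : O (rep O) by apply: xgetPex; exists x; apply: orb_self.
  have := orb_self x; rewrite -(orb_eq rO); case=> g gG xe.
  by exists g; rewrite ?mem_enum //; exists O.
apply: leq_trans; first exact: cU.
apply: leq_trans; first apply: (@sum_le_const _ _ _ (Fix_count_quot G act T n)).
  by move=> g; apply: setcard_img; apply: Qs_fin.
by rewrite cardT.
Qed.

End Orbits.

Section E.
Local Open Scope ereal_scope.
Variable R : realType.
Implicit Types u v : (\bar R)^nat.

Lemma E1 u (b : \bar R) N : (forall n, (N <= n)%N -> u n <= b) -> limn_esup u <= b.
Proof.
move=> H; rewrite /limn_esup /limf_esup.
apply: (@le_trans _ _ (ereal_sup (u @` [set n | (N <= n)%N]))).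
  by apply: ereal_inf_lbound; exists [set n | (N <= n)%N] => //; exists N.
by apply: ge_ereal_sup => _ [n Nn <-]; exact: H.
Qed.

Lemma E2 u (b : \bar R) : limn_esup u < b -> exists N, forall n, (N <= n)%N -> u n < b.
Proof.
case/ereal_inf_lt => _ [V [N _ NV] <-] hb; exists N => n Nn.
apply: le_lt_trans hb; apply: ereal_sup_ubound; exists n => //; exact: NV.
Qed.

Lemma E3 u v : (forall e : R, (0 < e)%R -> exists N, forall n, (N <= n)%N -> u n <= v n + e%:E) ->
  limn_esup u <= limn_esup v.
Proof.
move=> H; rewrite {2}/limn_esup /limf_esup.
apply: le_ereal_inf_tmp => _ [V [M _ MV] <-].
apply/lee_addgt0Pr => e e0; have [N HN] := H e e0.
apply: (@le_trans _ _ (ereal_sup (u @` [set n | (maxn M N <= n)%N]))).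
  by apply: ereal_inf_lbound; exists [set n | (maxn M N <= n)%N] => //; exists (maxn M N).
apply: ge_ereal_sup => _ [n /= Hn <-].
apply: le_trans; first apply: HN; first exact: leq_trans (leq_maxr _ _) Hn.
apply: leeD2r; apply: ereal_sup_ubound; exists n => //; apply: MV.
exact: leq_trans (leq_maxl _ _) Hn.
Qed.

End E.

Lemma lnle (R: realType) (x y : R) : 0 < x -> x <= y -> ln x <= ln y.
Proof. by move=> x0 xy; rewrite ler_ln ?posrE // (lt_le_trans x0 xy). Qed.

Lemma RSum (R : realType) (I : eqType) (s : seq I) (a : I -> nat) (M : R) :
  (forall i, i \in s -> (a i)%:R <= M) ->
  ((\sum_(i <- s) a i)%N%:R <= (size s)%:R * M).
Proof.
elim: s => [|i s IH] H; first by rewrite big_nil mul0r.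
rewrite big_cons natrD /= -[(size s).+1]addn1 natrD mulrDl mul1r [in X in _ <= X]addrC.
apply: lerD; first by apply: H; rewrite mem_head.
by apply: IH => j js; apply: H; rewrite inE js orbT.
Qed.

Theorem corollary9 (R : realType) (X : metricType R) (T Tinv : X -> X)
  (gT : finGroupType) (G : {group gT}) (act : X -> gT -> X) (eta : R) :
  compact [set: X] ->
  continuous T -> continuous Tinv -> cancel T Tinv -> cancel Tinv T ->
  (forall n : nat, (1 <= n)%N -> finite_set [set x : X | iter n T x = x]) ->
  (forall x, act x 1%g = x) ->
  (forall x g h, g \in G -> h \in G -> act (act x g) h = act x (g * h)%g) ->
  (forall g, g \in G -> continuous (act^~ g)) ->
  (forall g x, g \in G -> T (act x g) = act (T x) g) ->
  0 < eta ->
  growth R (Fix_count T) = eta%:E ->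
  (eta%:E <= growth R (Fix_count_quot G act T) <= (nabla G)%:R%:E * eta%:E)%E.
Proof.
move=> _ _ _ _ _ hfin h1 hM _ hc eta0 Hg.
have hK : (0 < #|gT|)%N by apply/card_gt0P; exists 1%g.
have hD : (0 < nabla G)%N.
  apply: leq_trans (order_gt0 1%g) _.
  by rewrite /nabla; apply: (leq_bigmax_cond (F := fun g => #[g]%g)); rewrite group1.
apply/andP; split.
  rewrite -Hg /growth; apply: E3 => e e0.
  pose N := (Num.Def.truncn (ln (#|gT|%:R : R) / e)).+1.
  have HN : ln (#|gT|%:R : R) / e < N%:R by apply: truncnS_gt.
  exists N.+1 => n Nn.
  have n1 : (1 <= n)%N by apply: leq_trans Nn.
  have n0 : (0 : R) < n%:R by rewrite ltr0n.
  case: eqP => [_|/eqP Fn0]; first exact: leNye.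
  have c1 : ((Fix_count T) n <= #|gT| * (Fix_count_quot G act T) n)%N by apply: C1.
  have Fq0 : (Fix_count_quot G act T) n != 0%N.
    by apply/eqP => E; move: c1; rewrite E muln0 leqn0; apply/negP.
  rewrite (negbTE Fq0) -EFinD lee_fin.
  have l1 : ln ((Fix_count T) n)%:R <= ln (#|gT|%:R : R) + ln ((Fix_count_quot G act T) n)%:R.
    rewrite -lnM; last 2 first.
    - by rewrite posrE ltr0n.
    - by rewrite posrE ltr0n lt0n.
    by apply: lnle; rewrite ?ltr0n ?lt0n // -natrM ler_nat.
  have l2 : ln (#|gT|%:R : R) <= e * n%:R.
    move: HN; rewrite ltr_pdivrMr // => HN.
    have : (N%:R : R) <= n%:R by rewrite ler_nat; apply: leq_trans Nn.
    nra.
  rewrite ler_pdivrMr // mulrDl divfK ?gt_eqF //.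
  lra.
rewrite -EFinM; apply/lee_addgt0Pr => e e0; rewrite -EFinD.
set D := nabla G.
have D0 : (0 : R) < D%:R by rewrite ltr0n.
pose d := e / (2 * D%:R).
have d0 : 0 < d by rewrite divr_gt0 // mulr_gt0.
have Dd : D%:R * d = e / 2.
  by rewrite /d; field; rewrite gt_eqF.
have [N0 HN0] : exists N0, forall n, (N0 <= n)%N ->
    ((if (Fix_count T) n == 0%N then -oo else (ln ((Fix_count T) n)%:R / n%:R)%:E) < (eta + d)%:E)%E.
  apply: E2; move: Hg; rewrite /growth => ->.
  by rewrite lte_fin ltrDl.
have Fb : forall m, (maxn N0 1 <= m)%N -> ((Fix_count T) m)%:R <= expR (m%:R * (eta + d)).
  move=> m Hm; have := HN0 m (leq_trans (leq_maxl _ _) Hm).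
  have m0 : (0 : R) < m%:R by rewrite ltr0n; apply: leq_trans (leq_maxr _ _) Hm.
  case: eqP => [-> _|/eqP Fm0]; first exact: expR_ge0.
  rewrite lte_fin ltr_pdivrMr // => H.
  rewrite -[X in X <= _]lnK ?posrE ?ltr0n ?lt0n // ler_expR mulrC.
  exact: ltW.
pose N1 := (Num.Def.truncn (ln (D%:R : R) / (e / 2))).+1.
have HN1 : ln (D%:R : R) / (e / 2) < N1%:R by apply: truncnS_gt.
apply: (E1 (N := maxn (maxn N0 1) N1)) => n Hn.
case: eqP => [_|/eqP Fq0]; first exact: leNye.
rewrite lee_fin.
have n1 : (1 <= n)%N by apply: leq_trans Hn; rewrite leq_max leq_maxr.
have n0 : (0 : R) < n%:R by rewrite ltr0n.
have c2 := C2 h1 hM hc hfin n1.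
have S : ((Fix_count_quot G act T) n)%:R <= D%:R * expR (n%:R * D%:R * (eta + d)).
  move: c2; rewrite -(ler_nat R) => c2; apply: (le_trans c2).
  rewrite -[X in _ <= X%:R * _](size_iota 0 D).
  apply: RSum => k; rewrite mem_iota add0n => /andP[_ kD].
  apply: le_trans; first apply: Fb.
    apply: leq_trans (leq_trans (leq_maxl _ _) Hn) _.
    by rewrite leq_pmulr.
  rewrite ler_expR; apply: ler_wpM2r; first by rewrite ltW ?addr_gt0.
  by rewrite -natrM ler_nat leq_mul2l kD orbT.
have l1 : ln ((Fix_count_quot G act T) n)%:R <= ln (D%:R : R) + n%:R * D%:R * (eta + d).
  rewrite -[X in _ + X]expRK -lnM ?posrE ?expR_gt0 //.
  by apply: lnle; rewrite ?ltr0n ?lt0n.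
have l2 : ln (D%:R : R) <= n%:R * (e / 2).
  move: HN1; rewrite ltr_pdivrMr ?divr_gt0 // => HN1.
  have : (N1%:R : R) <= n%:R by rewrite ler_nat; exact: leq_trans (leq_maxr _ _) Hn.
  nra.
rewrite ler_pdivrMr //.
have E : n%:R * D%:R * (eta + d) = n%:R * D%:R * eta + n%:R * (e / 2).
  by rewrite mulrDr -Dd mulrA.
nra.
Qed.
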